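(* Let $A$ be a basic connected finite dimensional algebra over an algebraically closed field $k$ with ordinary quiver $Q$ without oriented cycles, and assume $A$ is constricted, i.e. $\dim_k e_yAe_x=1$ for every arrow $x\to y$ of $Q$. Let $\nu\colon kQ\twoheadrightarrow A$ be any presentation and $I=\mathsf{Ker}(\nu)$. Then $\theta_\nu\colon\mathsf{Hom}(\pi_1(Q,I),k^+)\to\mathsf{HH}^1(A)$ is an isomorphism. In particular $\mathsf{HH}^1(A)$ is an abelian Lie algebra.
   Context: Fix a complete set $e_1,\dots,e_n$ of primitive orthogonal idempotents of $A$ indexed by $Q_0=\{1,\dots,n\}$, $E=\bigoplus ke_i$. A presentation is a surjective algebra map $\nu\colon kQ\twoheadrightarrow A$ with admissible kernel ($(kQ^+)^N\subseteq\mathsf{Ker}\,\nu\subseteq(kQ^+)^2$ for some $N\ge2$, $kQ^+$ the arrow ideal) and $\nu(e_i)=e_i$. $\mathsf{HH}^1(A)=Der_0(A)/Int_0(A)$, with $Der_0(A)$ the derivations vanishing on all $e_i$ (commutator bracket) and $Int_0(A)=\{a\mapsto ea-ae\mid e\in E\}$. Walks: paths in $Q$ with formal inverse arrows allowed. $\sim_I$ is the smallest equivalence relation on walks with $\alpha\alpha^{-1}\sim_I e_y$, $\alpha^{-1}\alpha\sim_I e_x$ for arrows $\alpha\colon x\to y$, compatible with concatenation, and identifying two paths occurring with nonzero coefficient in a same minimal relation of $I$ (a nonzero $\sum t_iu_i\in I$, $t_i\neq0$, distinct paths, no nonempty proper subsum in $I$). $\pi_1(Q,I)$ is the group of classes of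 closed walks at a fixed vertex $x_0$. Fix a maximal tree $T$ of $Q$, $\gamma_x$ the minimal walk in $T$ from $x_0$ to $x$. For a group homomorphism $f\colon\pi_1(Q,I)\to k^+$, $\theta_\nu(f)$ is the class of the derivation $\tilde f$ with $\tilde f(\nu(u))=f([\gamma_y^{-1}u\gamma_x]_I)\nu(u)$ for paths $u$ from $x$ to $y$. *)

(* Defs.v *)
From HB Require Import structures.
From mathcomp Require Import all_boot all_order all_algebra all_field.
From Stdlib Require Import Relation_Operators.
Set Implicit Arguments. Unset Strict Implicit. Unset Printing Implicit Defensive.
Import GRing.Theory.
Local Open Scope ring_scope.

(* A step of a walk is (alpha, true) (traverse alpha forwards) or             *)
(* (alpha, false) (traverse the formal inverse alpha^-1).                     *)
(* Walks are written in TRAVERSAL order (first step first); thus the walk     *)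
(* written  gamma_y^-1 u gamma_x  in the paper (composition from right to     *)
(* left) is  gamma_x ++ u ++ rev(gamma_y)  here.                              *)
Section Quiver.
Variables (n : nat) (Ar : finType) (src tgt : Ar -> 'I_n).

Definition step_start (st : Ar * bool) : 'I_n :=
  if st.2 then src st.1 else tgt st.1.
Definition step_end (st : Ar * bool) : 'I_n :=
  if st.2 then tgt st.1 else src st.1.

Fixpoint wvalid (x : 'I_n) (w : seq (Ar * bool)) : bool :=
  if w is st :: w' then (step_start st == x) && wvalid (step_end st) w'
  else true.
Fixpoint wend (x : 'I_n) (w : seq (Ar * bool)) : 'I_n :=
  if w is st :: w' then wend (step_end st) w' else x.

Definition is_walk (x y : 'I_n) (w : seq (Ar * bool)) : bool :=
  wvalid x w && (wend x w == y).

Definition winv (w : seq (Ar * bool)) : seq (Ar * bool) :=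
  rev (map (fun st => (st.1, ~~ st.2)) w).

Definition fw (u : seq Ar) : seq (Ar * bool) := map (fun a => (a, true)) u.

(* u is a path from x to y (the empty path at x is the trivial path e_x) *)
Definition is_path (x y : 'I_n) (u : seq Ar) : bool := is_walk x y (fw u).

Definition acyclic : Prop :=
  forall (x : 'I_n) (u : seq Ar), is_path x x u -> u = [::].

Fixpoint reduced (w : seq (Ar * bool)) : bool :=
  match w with
  | st :: ((st' :: _) as w') =>
      ~~ ((st.1 == st'.1) && (st.2 != st'.2)) && reduced w'
  | _ => true
  end.

Definition in_tree (T : {set Ar}) (w : seq (Ar * bool)) : bool :=
  all (fun st => st.1 \in T) w.

Definition maximal_tree (x0 : 'I_n) (T : {set Ar}) : Prop :=
  (forall x, exists w, is_walk x0 x w && in_tree T w) /\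
  (forall x w, is_walk x x w -> in_tree T w -> reduced w -> w = [::]).

Definition tree_walks (x0 : 'I_n) (T : {set Ar}) (gam : 'I_n -> seq (Ar * bool))
  : Prop :=
  forall x, [/\ is_walk x0 x (gam x), in_tree T (gam x) &
     forall w, is_walk x0 x w -> in_tree T w -> (size (gam x) <= size w)%N].

End Quiver.

Section Algebra.
Variables (k : fieldType) (A : falgType k).
Variables (n : nat) (Ar : finType) (src tgt : Ar -> 'I_n).
Variables (e : 'I_n -> A).

Definition primitive_idem (a : A) : Prop :=
  a * a = a /\ a != 0 /\
  forall b c : A, b * b = b -> c * c = c -> b * c = 0 -> c * b = 0 ->
    b + c = a -> b = 0 \/ c = 0.

Definition complete_prim_orth_idem : Prop :=
  [/\ forall i, primitive_idem (e i),
      forall i j, i != j -> e i * e j = 0 &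
      \sum_(i < n) e i = 1].

(* A is basic: the projectives e_i A are pairwise non-isomorphic *)
Definition basic_wrt : Prop :=
  forall i j, i != j -> ~ exists a b : A,
    [/\ e i * a * e j = a, e j * b * e i = b, a * b = e i & b * a = e j].

Definition connected_alg : Prop :=
  (1 : A) != 0 /\
  forall c : A, c * c = c -> (forall a : A, c * a = a * c) -> c = 0 \/ c = 1.

Definition constricted : Prop :=
  forall alpha : Ar,
    \dim (<[e (tgt alpha)]> * fullv * <[e (src alpha)]>)%VS = 1%N.

(* An algebra map nu : kQ -> A with nu(e_i) = e_i is the same as a choice of  *)
(* nu(alpha) in e_y A e_x for each arrow alpha : x -> y (universal property   *)
(* of kQ); nu of the path u = alpha_m ... alpha_1 (traversal order            *)
(* alpha_1, ..., alpha_m) from x is nu(alpha_m) ... nu(alpha_1) e_x.          *)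
Variable nuA : Ar -> A.

Definition nu_path (x : 'I_n) (u : seq Ar) : A :=
  foldl (fun acc a => nuA a * acc) (e x) u.

(* An element of kQ: a finite linear combination sum_i t_i u_i of pairwise   *)
(* distinct paths u_i = (source, arrows).                                    *)
Definition kQ_elt (lc : seq (k * ('I_n * seq Ar))) : Prop :=
  all (fun p => wvalid src tgt p.2.1 (fw p.2.2)) lc && uniq (map snd lc).

Definition nu_lc (lc : seq (k * ('I_n * seq Ar))) : A :=
  \sum_(p <- lc) p.1 *: nu_path p.2.1 p.2.2.

Definition presentation : Prop :=
  [/\ forall alpha, e (tgt alpha) * nuA alpha * e (src alpha) = nuA alpha,
      forall a : A, exists lc, kQ_elt lc /\ a = nu_lc lc,
      (* (kQ^+)^N is contained in I for some N >= 2 *)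
      exists N, (2 <= N)%N /\ forall x u, wvalid src tgt x (fw u) ->
                  (N <= size u)%N -> nu_path x u = 0 &
      (* I is contained in (kQ^+)^2 *)
      forall lc, kQ_elt lc -> nu_lc lc = 0 ->
        forall p, p \in lc -> (size p.2.2 <= 1)%N -> p.1 = 0].

Definition minimal_relation (lc : seq (k * ('I_n * seq Ar))) : Prop :=
  [/\ kQ_elt lc, lc != [::], all (fun p => p.1 != 0) lc, nu_lc lc = 0 &
      forall m : bitseq, size m = size lc -> (0 < count id m < size lc)%N ->
        nu_lc (mask m lc) != 0].

Definition simI_gen (z : 'I_n) (g g' : seq (Ar * bool)) : Prop :=
  (exists alpha, g = [:: (alpha, false); (alpha, true)] /\ g' = [::]) \/
  (exists alpha, g = [:: (alpha, true); (alpha, false)] /\ g' = [::]) \/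
  (exists lc u v, [/\ minimal_relation lc, (z, u) \in map snd lc,
                      (z, v) \in map snd lc, g = fw u & g' = fw v]).

Definition simI_step (w w' : 'I_n * seq (Ar * bool)) : Prop :=
  exists p g g' q, [/\ w.1 = w'.1, w.2 = p ++ g ++ q, w'.2 = p ++ g' ++ q,
     wvalid src tgt w.1 w.2 && wvalid src tgt w'.1 w'.2 &
     simI_gen (wend src tgt w.1 p) g g'].

Definition simI := clos_refl_sym_trans _ simI_step.

(* a group homomorphism pi_1(Q,I) -> k^+ is given by a function f on closed   *)
(* walks at x0 (steps) that is constant on ~_I-classes and additive for       *)
(* concatenation; two such are equal iff they agree on closed walks at x0.    *)
Variable x0 : 'I_n.
Definition closed_walk (w : seq (Ar * bool)) : bool := is_walk src tgt x0 x0 w.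

Definition hom_pi1 (f : seq (Ar * bool) -> k) : Prop :=
  (forall w w', closed_walk w -> closed_walk w' -> simI (x0, w) (x0, w') ->
     f w = f w') /\
  (forall w1 w2, closed_walk w1 -> closed_walk w2 -> f (w1 ++ w2) = f w1 + f w2).

Definition der0 (D : A -> A) : Prop :=
  [/\ forall (c : k) (a b : A), D (c *: a + b) = c *: D a + D b,
      forall a b : A, D (a * b) = D a * b + a * D b &
      forall i, D (e i) = 0].

Definition int0 (D : A -> A) : Prop :=
  exists c : 'I_n -> k, forall a : A,
    D a = (\sum_(i < n) c i *: e i) * a - a * (\sum_(i < n) c i *: e i).

(* D is a representative (in Der_0(A)) of theta_nu(f) in HH^1(A):            *)
(* D(nu(u)) = f([gamma_y^-1 u gamma_x]) nu(u) for every path u : x -> y.     *)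
Variable gam : 'I_n -> seq (Ar * bool).
Definition theta_rep (f : seq (Ar * bool) -> k) (D : A -> A) : Prop :=
  der0 D /\ forall x y u, is_path src tgt x y u ->
    D (nu_path x u) = f (gam x ++ fw u ++ winv (gam y)) *: nu_path x u.

End Algebra.

(* Main.v *)
Require Import Defs.
From HB Require Import structures.
From mathcomp Require Import all_boot all_order all_algebra all_field.
From mathcomp Require Import ring.
From Stdlib Require Import Relation_Operators Classical.
Import GRing.Theory.
Local Open Scope ring_scope.

Module PW.
Set Implicit Arguments. Unset Strict Implicit. Unset Printing Implicit Defensive.

Section Walks.
Variables (n : nat) (Ar : finType) (src tgt : Ar -> 'I_n).
Definition sinv (st : Ar * bool) := (st.1, ~~ st.2).
Implicit Types (w a b : seq (Ar * bool)) (st : Ar * bool) (u v : seq Ar).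

Lemma wvalid_cat x a b : wvalid src tgt x (a ++ b) =
  wvalid src tgt x a && wvalid src tgt (wend src tgt x a) b.
Proof. by elim: a x => [|st a IH] x //=; rewrite IH andbA. Qed.

Lemma wend_cat x a b : wend src tgt x (a ++ b) = wend src tgt (wend src tgt x a) b.
Proof. by elim: a x => [|st a IH] x //=. Qed.

Lemma winv_cons st w : winv (st :: w) = winv w ++ [:: sinv st].
Proof. by rewrite /winv /= rev_cons cats1. Qed.

Lemma winv_cat a b : winv (a ++ b) = winv b ++ winv a.
Proof. by rewrite /winv map_cat rev_cat. Qed.

Lemma winvK w : winv (winv w) = w.
Proof. by rewrite /winv map_rev revK -map_comp map_id_in // => [[a b]] _ /=; rewrite negbK. Qed.

Lemma wvalid_winv x w : wvalid src tgt x w ->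
  wvalid src tgt (wend src tgt x w) (winv w) && (wend src tgt (wend src tgt x w) (winv w) == x).
Proof.
elim: w x => [|st w IH] x /=; first by rewrite eqxx.
case/andP=> /eqP <- /IH /andP[h1 /eqP h2].
rewrite winv_cons wvalid_cat wend_cat h1 h2 /= /step_start /step_end /sinv /=.
by case: st.2; rewrite /= !eqxx.
Qed.

Lemma fw_cat u v : fw (u ++ v) = fw u ++ fw v.
Proof. exact: map_cat. Qed.

Lemma wend_winv x w : wvalid src tgt x w ->
  wend src tgt (wend src tgt x w) (winv w) = x.
Proof. by case/wvalid_winv/andP=> _ /eqP. Qed.

Lemma valid_dropw x p w q : wvalid src tgt x (p ++ w ++ winv w ++ q) ->
  wvalid src tgt x (p ++ q).
Proof.
rewrite !wvalid_cat => /andP[-> /and3P[Vw _ Vq]] /=.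
by move: Vq; rewrite wend_winv.
Qed.

Lemma wend_dropw x p w q : wvalid src tgt x (p ++ w) ->
  wend src tgt x (p ++ w ++ winv w ++ q) = wend src tgt x (p ++ q).
Proof.
rewrite wvalid_cat => /andP[_ Vw].
by rewrite !wend_cat wend_winv.
Qed.

End Walks.

End PW.
Import PW.

Module PS.
Set Implicit Arguments. Unset Strict Implicit. Unset Printing Implicit Defensive.

Section SimI.
Variables (k : fieldType) (A : falgType k).
Variables (n : nat) (Ar : finType) (src tgt : Ar -> 'I_n).
Variables (e : 'I_n -> A) (nuA : Ar -> A).
Implicit Types (w p q : seq (Ar * bool)) (st : Ar * bool) (u v : seq Ar).
Local Notation simI := (simI src tgt e nuA).

Lemma valid_drop2 x p st q : wvalid src tgt x (p ++ [:: st; sinv st] ++ q) ->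
  wvalid src tgt x (p ++ q).
Proof.
rewrite !wvalid_cat /= => /and3P[-> /and3P[/eqP E _ _]].
by move: E; case: st => a [] /= <-.
Qed.

Lemma cancel_step x p st q : wvalid src tgt x (p ++ [:: st; sinv st] ++ q) ->
  simI (x, p ++ [:: st; sinv st] ++ q) (x, p ++ q).
Proof.
move=> V; apply: rst_step; exists p, [:: st; sinv st], [::], q; split => //.
  by rewrite V (valid_drop2 V).
case: st {V} => a [|]; rewrite /sinv /=.
  by right; left; exists a.
by left; exists a.
Qed.

Lemma cancel_walk x p w q : wvalid src tgt x (p ++ w ++ winv w ++ q) ->
  simI (x, p ++ w ++ winv w ++ q) (x, p ++ q).
Proof.
elim: w p q => [|st w IH] p q /=; first by move=> _; apply: rst_refl.
have E : p ++ st :: w ++ winv (st :: w) ++ q =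
         rcons p st ++ w ++ winv w ++ (sinv st :: q).
  by rewrite winv_cons -cats1 -!catA.
rewrite E => V; eapply rst_trans; first exact: (IH _ _ V).
have E2 : rcons p st ++ sinv st :: q = p ++ [:: st; sinv st] ++ q.
  by rewrite -cats1 -catA.
rewrite E2; apply: cancel_step; rewrite -E2.
exact: valid_dropw V.
Qed.
End SimI.

End PS.
Import PS.

Module PN.
Set Implicit Arguments. Unset Strict Implicit. Unset Printing Implicit Defensive.

Section Nu.
Variables (k : fieldType) (A : falgType k).
Variables (n : nat) (Ar : finType) (src tgt : Ar -> 'I_n).
Variables (e : 'I_n -> A) (nuA : Ar -> A).
Hypothesis He_idem : forall i, e i * e i = e i.
Hypothesis He_orth : forall i j, i != j -> e i * e j = 0.
Hypothesis HnuA : forall a, e (tgt a) * nuA a * e (src a) = nuA a.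
Implicit Types (u v : seq Ar).

Definition fa := fun acc a => nuA a * acc.
Definition G u := foldl fa 1 u.

Lemma foldl_nu X u : foldl fa X u = G u * X.
Proof.
rewrite /G; elim: u X => [|a u IH] X /=; first by rewrite mul1r.
by rewrite IH [in RHS]IH /fa mulr1 mulrA.
Qed.

Lemma nu_pathE z u : nu_path e nuA z u = G u * e z.
Proof. exact: foldl_nu. Qed.

Lemma G_cat u v : G (u ++ v) = G v * G u.
Proof. by rewrite /G foldl_cat -/(G u) foldl_nu. Qed.

Lemma G_cons a u : G (a :: u) = G u * nuA a.
Proof. by rewrite -cat1s G_cat /G /= /fa mulr1. Qed.

Lemma nuA_r a : nuA a * e (src a) = nuA a.
Proof. by rewrite -{1}HnuA -mulrA He_idem HnuA. Qed.

Lemma nuA_l a : e (tgt a) * nuA a = nuA a.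
Proof. by rewrite -{1}HnuA !mulrA He_idem HnuA. Qed.

Lemma nu_cons z a u : src a = z ->
  nu_path e nuA z (a :: u) = nu_path e nuA (tgt a) u * nuA a.
Proof.
move=> <-; rewrite !nu_pathE G_cons -!mulrA nuA_r; congr (_ * _).
by rewrite nuA_l.
Qed.

Lemma nu_r z u : nu_path e nuA z u * e z = nu_path e nuA z u.
Proof. by rewrite nu_pathE -mulrA He_idem. Qed.

Lemma nu_valid_l z u : wvalid src tgt z (fw u) ->
  e (wend src tgt z (fw u)) * nu_path e nuA z u = nu_path e nuA z u.
Proof.
elim: u z => [|a u IH] z /=; first by rewrite /nu_path /= He_idem.
case/andP=> /eqP E V; rewrite /step_end /= in V *.
by rewrite (nu_cons _ E) mulrA IH.
Qed.

Lemma e_nu y z u : wvalid src tgt z (fw u) ->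
  e y * nu_path e nuA z u =
  if y == wend src tgt z (fw u) then nu_path e nuA z u else 0.
Proof.
move=> V; case: eqP => [->|/eqP ne]; first exact: nu_valid_l.
by rewrite -(nu_valid_l V) mulrA He_orth // mul0r.
Qed.

Lemma nu_e z u x : nu_path e nuA z u * e x =
  if z == x then nu_path e nuA z u else 0.
Proof.
case: eqP => [->|/eqP ne]; first exact: nu_r.
by rewrite nu_pathE -mulrA He_orth // mulr0.
Qed.

Lemma nu_mul z u z' v : wvalid src tgt z (fw u) ->
  nu_path e nuA z' v * nu_path e nuA z u =
  if wend src tgt z (fw u) == z' then nu_path e nuA z (u ++ v) else 0.
Proof.
move=> V; rewrite [nu_path _ _ z' v]nu_pathE -mulrA e_nu // eq_sym.
case: ifP => _; last by rewrite mulr0.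
by rewrite !nu_pathE G_cat mulrA.
Qed.

Lemma sumE_l (c : 'I_n -> k) j :
  (\sum_(i < n) c i *: e i) * e j = c j *: e j.
Proof.
rewrite mulr_suml (bigD1 j) //= big1 ?addr0 => [|i ne]; rewrite -scalerAl.
  by rewrite He_idem.
by rewrite He_orth ?scaler0.
Qed.

Lemma sumE_r (c : 'I_n -> k) j :
  e j * (\sum_(i < n) c i *: e i) = c j *: e j.
Proof.
rewrite mulr_sumr (bigD1 j) //= big1 ?addr0 => [|i ne]; rewrite -scalerAr.
  by rewrite He_idem.
by rewrite He_orth 1?eq_sym ?scaler0.
Qed.

Lemma E_nu (c : 'I_n -> k) z u : wvalid src tgt z (fw u) ->
  (\sum_(i < n) c i *: e i) * nu_path e nuA z u =
  c (wend src tgt z (fw u)) *: nu_path e nuA z u.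
Proof.
move=> V; rewrite -{1}(nu_valid_l V) mulrA sumE_l -scalerAl.
by rewrite nu_valid_l.
Qed.

Lemma nu_E (c : 'I_n -> k) z u :
  nu_path e nuA z u * (\sum_(i < n) c i *: e i) = c z *: nu_path e nuA z u.
Proof. by rewrite -nu_r -mulrA sumE_r -scalerAr nu_r. Qed.

Definition nuw (w : 'I_n * seq Ar -> k) (L : seq (k * ('I_n * seq Ar))) : A :=
  \sum_(p <- L) (p.1 * w p.2) *: nu_path e nuA p.2.1 p.2.2.

Lemma nu_lcE L : nu_lc e nuA L = nuw (fun _ => 1) L.
Proof. by apply: eq_bigr => p _; rewrite mulr1. Qed.

End Nu.

End PN.
Import PN.

Module PM.
Set Implicit Arguments. Unset Strict Implicit. Unset Printing Implicit Defensive.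

Section Lin.
Variables (k : fieldType) (A : falgType k).
Variable D : A -> A.
Hypothesis HD : forall (c : k) (a b : A), D (c *: a + b) = c *: D a + D b.

Lemma D0 : D 0 = 0.
Proof.
have := HD 1 0 0; rewrite !scale1r !addr0 => /(congr1 (fun x => x - D 0)).
rewrite subrr addrK => E; by rewrite -E.
Qed.
Lemma DD a b : D (a + b) = D a + D b.
Proof. by have := HD 1 a b; rewrite !scale1r. Qed.
Lemma DZ c a : D (c *: a) = c *: D a.
Proof. by have := HD c a 0; rewrite !addr0 D0 addr0. Qed.
Lemma DN a : D (- a) = - D a.
Proof. by rewrite -scaleN1r DZ scaleN1r. Qed.
Lemma Dsum I (r : seq I) (P : pred I) F :
  D (\sum_(i <- r | P i) F i) = \sum_(i <- r | P i) D (F i).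
Proof. exact: (big_morph D DD D0). Qed.
End Lin.

Section Lists.
Variables (k : fieldType) (A : falgType k).
Variables (n : nat) (Ar : finType) (src tgt : Ar -> 'I_n).
Variables (e : 'I_n -> A) (nuA : Ar -> A).
Local Notation nuw := (nuw e nuA).
Local Notation nu := (nu_path e nuA).
Implicit Types (L : seq (k * ('I_n * seq Ar))) (w : 'I_n * seq Ar -> k).

Lemma nuw_cat w L1 L2 : nuw w (L1 ++ L2) = nuw w L1 + nuw w L2.
Proof. exact: big_cat. Qed.

Lemma nuw_scale w c L :
  nuw w (map (fun p => (c * p.1, p.2)) L) = c *: nuw w L.
Proof.
rewrite /PN.nuw big_map scaler_sumr; apply: eq_bigr => p _.
by rewrite scalerA /= mulrA.
Qed.

Lemma eq_nuw w w' L : {in L, forall p, w p.2 = w' p.2} -> nuw w L = nuw w' L.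
Proof. by move=> h; rewrite /PN.nuw big_seq_cond [RHS]big_seq_cond; apply: eq_bigr => p /andP[/h -> _]. Qed.

Lemma nuw_cons w p L : nuw w (p :: L) = (p.1 * w p.2) *: nu p.2.1 p.2.2 + nuw w L.
Proof. exact: big_cons. Qed.

Lemma nuw_mask w L m : size m = size L ->
  nuw w L = nuw w (mask m L) + nuw w (mask (map negb m) L).
Proof.
elim: L m => [|p L IH] [|b m] //=; first by rewrite /PN.nuw big_nil addr0.
move=> [] /IH E.
case: b; rewrite /= !nuw_cons E ?addrA //.
by rewrite [_ + nuw _ (mask m L)]addrC.
Qed.

Lemma nuw_filter P L :
  nu_lc e nuA (filter (fun p => P p.2) L) = nuw (fun q => (P q)%:R) L.
Proof.
rewrite /nu_lc big_filter big_mkcond; apply: eq_bigr => p _.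
by case: (P p.2); rewrite ?mulr1 ?mulr0 ?scale0r.
Qed.

Lemma nuw_lin w w' (c : k) L :
  nuw (fun q => c * w q + w' q) L = c *: nuw w L + nuw w' L.
Proof.
rewrite /PN.nuw scaler_sumr -big_split; apply: eq_bigr => p _ /=.
by rewrite scalerA -scalerDl mulrDr mulrCA mulrA.
Qed.

Lemma D_nuw (D : A -> A) (lam : 'I_n * seq Ar -> k) w L :
  (forall (c : k) (a b : A), D (c *: a + b) = c *: D a + D b) ->
  {in L, forall p, D (nu p.2.1 p.2.2) = lam p.2 *: nu p.2.1 p.2.2} ->
  D (nuw w L) = nuw (fun q => w q * lam q) L.
Proof.
move=> HD h; rewrite /PN.nuw Dsum // big_seq [RHS]big_seq; apply: eq_bigr => p pL.
by rewrite DZ // h // scalerA mulrA.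
Qed.

Lemma sum_partition (I J : eqType) (h : I -> J) (r : seq I) (F : I -> A) :
  \sum_(q <- undup (map h r)) \sum_(p <- r | h p == q) F p = \sum_(p <- r) F p.
Proof.
under eq_bigr do rewrite big_mkcond.
rewrite exchange_big /= big_seq [RHS]big_seq; apply: eq_bigr => p pr.
rewrite -big_mkcond -big_filter.
have -> : [seq i <- undup (map h r) | h p == i] = [:: h p].
  rewrite (eq_filter (a2 := pred1 (h p))); last by move=> i; rewrite /= eq_sym.
  by rewrite filter_pred1_uniq ?undup_uniq // mem_undup; apply: map_f.
by rewrite big_cons big_nil Monoid.mulm1.
Qed.

Definition mrg L : seq (k * ('I_n * seq Ar)) :=
  filter (fun p => p.1 != 0)
    [seq (\sum_(p <- L | p.2 == q) p.1, q) | q <- undup (map snd L)].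

Lemma nuw_mrg w L : nuw w (mrg L) = nuw w L.
Proof.
rewrite /mrg /PN.nuw big_filter big_mkcond /=.
transitivity (\sum_(i <- [seq (\sum_(p <- L | p.2 == q) p.1, q) | q <- undup (map snd L)])
   (i.1 * w i.2) *: nu i.2.1 i.2.2).
  by apply: eq_bigr => i _; case: eqP => // ->; rewrite mul0r scale0r.
rewrite big_map -[RHS](sum_partition snd); apply: eq_bigr => q _ /=.
rewrite mulr_suml scaler_suml; apply: eq_bigr => p /eqP -> //.
Qed.

Lemma mrg_uniq L : uniq (map snd (mrg L)).
Proof.
apply: (subseq_uniq (s2 := map snd [seq (\sum_(p <- L | p.2 == q) p.1, q) | q <- undup (map snd L)])).
  by apply: map_subseq; apply: filter_subseq.
by rewrite -map_comp map_id undup_uniq.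
Qed.

Lemma mrg_nz L : all (fun p => p.1 != 0) (mrg L).
Proof. exact: filter_all. Qed.

Lemma mrg_sub L q : q \in map snd (mrg L) -> q \in map snd L.
Proof.
case/mapP=> p; rewrite mem_filter => /andP[_ /mapP[q' q'L ->]] -> /=.
by rewrite mem_undup in q'L.
Qed.

End Lists.

End PM.
Import PM.

Module PG.
Set Implicit Arguments. Unset Strict Implicit. Unset Printing Implicit Defensive.

Section Group.
Variables (k : fieldType) (A : falgType k).
Variables (n : nat) (Ar : finType).
Variables (e : 'I_n -> A) (nuA : Ar -> A).
Local Notation nuw := (nuw e nuA).
Local Notation nu := (nu_path e nuA).
Variable D : A -> A.
Hypothesis HD : forall (c : k) (a b : A), D (c *: a + b) = c *: D a + D b.
Variable lam : 'I_n * seq Ar -> k.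
Hypothesis Hlam : forall q, D (nu q.1 q.2) = lam q *: nu q.1 q.2.
Variable L : seq (k * ('I_n * seq Ar)).

Lemma nuw0 : nuw (fun _ => 0) L = 0.
Proof. by rewrite /PN.nuw big1 // => p _; rewrite mulr0 scale0r. Qed.

Lemma group_aux s : forall w mu,
  (forall p, p \in L -> w p.2 != 0 -> lam p.2 \in mu :: s) ->
  nuw w L = 0 -> nuw (fun q => w q * (lam q == mu)%:R) L = 0.
Proof.
elim: s => [|mu1 s IH] w mu supp Hw.
  rewrite -Hw; apply: eq_nuw => p pL.
  case: (eqVneq (w p.2) 0) => [->|nz]; first by rewrite mul0r.
  by move: (supp p pL nz); rewrite mem_seq1 => ->; rewrite mulr1.
case: (eqVneq mu1 mu) => [E|ne].
  apply: IH => // p pL nz; move: (supp p pL nz).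
  by rewrite !in_cons E orbA orbb.
pose w' q := (- mu1) * w q + w q * lam q.
have Hw' : nuw w' L = 0.
  have HH : D (nuw w L) = nuw (fun q => w q * lam q) L.
    by apply: D_nuw => // p _; exact: Hlam.
  by rewrite nuw_lin Hw scaler0 add0r -HH Hw D0.
have supp' : forall p, p \in L -> w' p.2 != 0 -> lam p.2 \in mu :: s.
  move=> p pL; have -> : w' p.2 = w p.2 * (lam p.2 - mu1).
    by rewrite /w'; ring.
  rewrite mulf_eq0 negb_or subr_eq0 => /andP[nz ne1].
  by move: (supp p pL nz); rewrite !in_cons (negPf ne1) /=.
have := IH w' mu supp' Hw'.
have -> : nuw (fun q => w' q * (lam q == mu)%:R) L =
          nuw (fun q => (mu - mu1) * (w q * (lam q == mu)%:R) + 0) L.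
  apply: eq_nuw => p _; rewrite /w' addr0.
  case: eqVneq => [->|_]; rewrite ?mulr0 ?mulr1 //.
  by rewrite mulrBl mulNr addrC (mulrC mu).
rewrite nuw_lin nuw0 addr0 => /eqP; rewrite scaler_eq0 subr_eq0 eq_sym (negPf ne) /=.
by move/eqP.
Qed.

Lemma group_lemma mu : nu_lc e nuA L = 0 ->
  nuw (fun q => (lam q == mu)%:R) L = 0.
Proof.
move=> H.
have -> : nuw (fun q => (lam q == mu)%:R) L = nuw (fun q => 1 * (lam q == mu)%:R) L.
  by apply: eq_nuw => p _; rewrite mul1r.
apply: (@group_aux (map (fun p => lam p.2) L)); last by rewrite -nu_lcE.
move=> p pL _; rewrite in_cons; apply/orP; right; exact: (map_f (fun p => lam p.2)).
Qed.
End Group.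

End PG.
Import PG.

Module PP4.
Set Implicit Arguments. Unset Strict Implicit. Unset Printing Implicit Defensive.

Section Der.
Variables (k : fieldType) (A : falgType k).
Variables (n : nat) (Ar : finType) (src tgt : Ar -> 'I_n).
Variables (e : 'I_n -> A) (nuA : Ar -> A).
Hypothesis He_idem : forall i, e i * e i = e i.
Hypothesis He_orth : forall i j, i != j -> e i * e j = 0.
Hypothesis HnuA : forall a, e (tgt a) * nuA a * e (src a) = nuA a.
Hypothesis Hnz : forall a, nuA a != 0.
Hypothesis Hcon : constricted src tgt e.
Local Notation nu := (nu_path e nuA).

Variable D : A -> A.
Hypothesis HD : der0 e D.

Lemma der_lam a : exists l : k, D (nuA a) == l *: nuA a.
Proof.
case: HD => Hl HL He.
set V := (<[e (tgt a)]> * fullv * <[e (src a)]>)%VS.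
have inV x : e (tgt a) * x * e (src a) \in V.
  by apply: memv_mul; [apply: memv_mul; [apply: memv_line | apply: memvf] | apply: memv_line].
have DnuA : D (nuA a) = e (tgt a) * D (nuA a) * e (src a).
  by rewrite -{1}HnuA !HL !He mulr0 addr0 mul0r add0r.
have EV : <[nuA a]>%VS = V.
  apply/eqP; rewrite eqEdim dim_vline Hnz (Hcon a) leqnn andbT.
  by rewrite -memvE -HnuA inV.
have : D (nuA a) \in <[nuA a]>%VS by rewrite EV DnuA inV.
by case/vlineP=> l ->; exists l.
Qed.

Definition dlam a := xchoose (der_lam a).
Lemma dlamP a : D (nuA a) = dlam a *: nuA a.
Proof. exact/eqP/(xchooseP (der_lam a)). Qed.

Definition Lam (u : seq Ar) := \sum_(a <- u) dlam a.

Lemma D1 : D 1 = 0.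
Proof.
case: HD => _ HL _; have := HL 1 1; rewrite !mul1r !mulr1 => /(congr1 (fun x => x - D 1)).
by rewrite subrr addrK => E; rewrite -E.
Qed.

Lemma D_G u : D (G nuA u) = Lam u *: G nuA u.
Proof.
case: HD => Hl HL He.
elim: u => [|a u IH].
  by rewrite /G /= /Lam big_nil scale0r D1.
rewrite G_cons HL IH dlamP /Lam big_cons -scalerAl -scalerAr -scalerDl addrC.
done.
Qed.

Lemma D_nu z u : D (nu z u) = Lam u *: nu z u.
Proof.
case: HD => Hl HL He.
by rewrite nu_pathE HL He mulr0 addr0 D_G scalerAl.
Qed.

Definition Fw (w : seq (Ar * bool)) : k :=
  \sum_(st <- w) (if st.2 then dlam st.1 else - dlam st.1).

Lemma Fw_cat w1 w2 : Fw (w1 ++ w2) = Fw w1 + Fw w2.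
Proof. exact: big_cat. Qed.

Lemma Fw_fw u : Fw (fw u) = Lam u.
Proof. by rewrite /Fw big_map. Qed.

Lemma Fw_winv w : Fw (winv w) = - Fw w.
Proof.
rewrite /Fw /winv big_rev big_map -sumrN; apply: eq_bigr => st _ /=.
by case: st.2; rewrite ?opprK.
Qed.

Lemma minrel_Lam lc z u v : minimal_relation src tgt e nuA lc ->
  (z, u) \in map snd lc -> (z, v) \in map snd lc -> Lam u = Lam v.
Proof.
case=> _ _ _ H0 Hmin zu zv.
have HD' := HD; case: HD' => Hl _ _.
have G0 := group_lemma Hl (lam := fun q => Lam q.2) (fun q => D_nu q.1 q.2) (Lam u) H0.
rewrite -(@nuw_filter _ _ _ _ e nuA (fun q => Lam q.2 == Lam u) lc) filter_mask in G0.
set m := map _ lc in G0.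
have sm : size m = size lc by rewrite size_map.
have cpos : (0 < count id m)%N.
  rewrite count_map -has_count; apply/hasP.
  by case/mapP: zu => p pl E; exists p => //=; rewrite -E.
have call : count id m = size lc.
  apply/eqP; rewrite eqn_leq -{1}sm count_size /=.
  rewrite leqNgt; apply/negP => lt.
  by move: (Hmin m sm); rewrite cpos lt /= G0 eqxx => /(_ isT).
move: call; rewrite count_map => /eqP; rewrite -all_count => /allP Hall.
case/mapP: zv => p pl E; have := Hall p pl; rewrite /= -E /=.
by move/eqP.
Qed.

Lemma Fw_simI w w' : simI src tgt e nuA w w' -> Fw w.2 = Fw w'.2.
Proof.
elim=> {w w'} [w w' [p [g [g' [q [_ -> -> _ Hg]]]]]| w | w w' _ IH | w1 w2 w3 _ IH1 _ IH2].
- rewrite !Fw_cat; congr (_ + (_ + _)).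
  case: Hg => [[a [-> ->]]|[[a [-> ->]]|[lc [u [v [Hm Hu Hv -> ->]]]]]].
  + by rewrite /Fw !big_cons big_nil /= addr0 addNr.
  + by rewrite /Fw !big_cons big_nil /= addr0 addrN.
  + by rewrite !Fw_fw; apply: minrel_Lam Hm Hu Hv.
- by [].
- by rewrite IH.
- by rewrite IH1 IH2.
Qed.

Lemma Fw_hom x0 : hom_pi1 src tgt e nuA x0 Fw.
Proof.
split; last by move=> *; apply: Fw_cat.
by move=> w w' _ _ /Fw_simI.
Qed.

End Der.

End PP4.
Import PP4.

Module PH.
Set Implicit Arguments. Unset Strict Implicit. Unset Printing Implicit Defensive.

Section Hom.
Variables (k : fieldType) (A : falgType k).
Variables (n : nat) (Ar : finType) (src tgt : Ar -> 'I_n).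
Variables (e : 'I_n -> A) (nuA : Ar -> A).
Hypothesis He_idem : forall i, e i * e i = e i.
Hypothesis He_orth : forall i j, i != j -> e i * e j = 0.
Hypothesis HnuA : forall a, e (tgt a) * nuA a * e (src a) = nuA a.
Local Notation nu := (nu_path e nuA).
Local Notation wvalid := (wvalid src tgt).
Local Notation wend := (wend src tgt).
Implicit Types (lc : seq (k * ('I_n * seq Ar))).

Lemma minrel_all lc (P : 'I_n * seq Ar -> bool) p :
  minimal_relation src tgt e nuA lc -> p \in lc -> P p.2 ->
  nu_lc e nuA (filter (fun r => P r.2) lc) = 0 -> all (fun r => P r.2) lc.
Proof.
case=> _ _ _ _ Hmin pl Pp G0.
rewrite filter_mask in G0; set m := map _ lc in G0.
have sm : size m = size lc by rewrite size_map.
have cpos : (0 < count id m)%N.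
  by rewrite count_map -has_count; apply/hasP; exists p.
rewrite all_count; apply/eqP; move: cpos; rewrite /m count_map => cpos.
apply/eqP; rewrite eqn_leq count_size /= leqNgt; apply/negP => lt.
move: (Hmin m sm); rewrite /m count_map cpos lt /= -/m G0 eqxx => /(_ isT).
done.
Qed.

Lemma minrel_st lc p q : minimal_relation src tgt e nuA lc -> p \in lc -> q \in lc ->
  q.2.1 = p.2.1 /\ wend q.2.1 (fw q.2.2) = wend p.2.1 (fw p.2.2).
Proof.
move=> Hm pl ql; have Hm' := Hm; case: Hm' => /andP[Hv _] _ _ H0 _.
set z := p.2.1; set y := wend z (fw p.2.2).
pose P (r : 'I_n * seq Ar) := (r.1 == z) && (wend r.1 (fw r.2) == y).
have : all (fun r => P r.2) lc.
  apply: (minrel_all Hm pl); first by rewrite /P !eqxx.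
  transitivity (e y * nu_lc e nuA lc * e z); last by rewrite H0 mulr0 mul0r.
  rewrite /nu_lc big_filter mulr_sumr mulr_suml big_seq_cond [RHS]big_seq_cond.
  rewrite big_mkcond [RHS]big_mkcond; apply: eq_bigr => r _.
  case rl: (r \in lc) => //=.
  have Vr := allP Hv r rl.
  rewrite -scalerAr -scalerAl (e_nu He_idem He_orth HnuA) // /P [y == _]eq_sym.
  case: (_ == y); rewrite ?mul0r ?scaler0 ?andbF //.
  by rewrite (nu_e nuA He_idem He_orth) andbT; case: (_ == z); rewrite ?scaler0.
by move/allP/(_ q ql)/andP => [/eqP -> /eqP ->].
Qed.
End Hom.

Section HomF.
Variables (k : fieldType) (A : falgType k).
Variables (n : nat) (Ar : finType) (src tgt : Ar -> 'I_n).
Variables (e : 'I_n -> A) (nuA : Ar -> A).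
Hypothesis He_idem : forall i, e i * e i = e i.
Hypothesis He_orth : forall i j, i != j -> e i * e j = 0.
Hypothesis HnuA : forall a, e (tgt a) * nuA a * e (src a) = nuA a.
Local Notation nu := (nu_path e nuA).
Local Notation wvalid := (wvalid src tgt).
Local Notation wend := (wend src tgt).
Variables (x0 : 'I_n) (gam : 'I_n -> seq (Ar * bool)).
Hypothesis Hgam : forall x, is_walk src tgt x0 x (gam x).
Variable f : seq (Ar * bool) -> k.
Hypothesis hf : hom_pi1 src tgt e nuA x0 f.
Local Notation closed := (closed_walk src tgt x0).
Implicit Types (w p q : seq (Ar * bool)) (u v : seq Ar).

Lemma gamV x : wvalid x0 (gam x). Proof. by case/andP: (Hgam x). Qed.
Lemma gamE x : wend x0 (gam x) = x. Proof. by case/andP: (Hgam x) => _ /eqP. Qed.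

Lemma f_simI w w' : closed w -> closed w' -> simI src tgt e nuA (x0, w) (x0, w') -> f w = f w'.
Proof. by case: hf => h _; apply: h. Qed.

Lemma f_cat w1 w2 : closed w1 -> closed w2 -> f (w1 ++ w2) = f w1 + f w2.
Proof. by case: hf => _ h; apply: h. Qed.

Lemma f_nil : f [::] = 0.
Proof.
have c0 : closed [::] by rewrite /closed_walk /is_walk /= eqxx.
have := f_cat c0 c0; rewrite cats0 => /(congr1 (fun x => x - f [::])).
by rewrite subrr addrK => E; rewrite -E.
Qed.

Lemma closed_cancel p w q : closed (p ++ w ++ winv w ++ q) -> closed (p ++ q).
Proof.
case/andP=> V E; apply/andP; split; first exact: valid_dropw V.
rewrite -(@wend_dropw _ _ _ _ _ _ w) //; move: V; rewrite catA wvalid_cat => /andP[] //.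
Qed.

Lemma f_cancel p w q : closed (p ++ w ++ winv w ++ q) ->
  f (p ++ w ++ winv w ++ q) = f (p ++ q).
Proof.
move=> C; apply: f_simI => //; first exact: closed_cancel C.
by apply: cancel_walk; case/andP: C.
Qed.

Lemma closed_winv w : closed w -> closed (winv w).
Proof.
case/andP=> V /eqP E; have := wvalid_winv V; rewrite E.
by rewrite /closed_walk /is_walk.
Qed.

Lemma f_winv w : closed w -> f (winv w) = - f w.
Proof.
move=> C; apply/eqP; rewrite -addr_eq0 addrC -f_cat ?closed_winv //.
have Cw : closed (w ++ winv w).
  case/andP: C => V /eqP E; have := wvalid_winv V; rewrite E => /andP[V2 /eqP E2].
  by rewrite /closed_walk /is_walk wvalid_cat V E V2 wend_cat E E2 eqxx.
have := @f_cancel [::] w [::]; rewrite /= !cats0 f_nil => -> //.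
Qed.

Lemma closed_cat w1 w2 : closed w1 -> closed w2 -> closed (w1 ++ w2).
Proof.
case/andP=> V1 /eqP E1 /andP[V2 /eqP E2].
by rewrite /closed_walk /is_walk wvalid_cat V1 E1 V2 wend_cat E1 E2 eqxx.
Qed.

Definition Wz z u := gam z ++ fw u ++ winv (gam (wend z (fw u))).
Definition flam (q : 'I_n * seq Ar) := f (Wz q.1 q.2).

Lemma closed_gam_mid z w y : wvalid z w -> wend z w = y ->
  closed (gam z ++ w ++ winv (gam y)).
Proof.
move=> V E; have := wvalid_winv (gamV y); rewrite gamE => /andP[V2 /eqP E2].
rewrite /closed_walk /is_walk !wvalid_cat !wend_cat gamV gamE V E V2 E2 /=.
by rewrite eqxx.
Qed.

Lemma closed_W z u : wvalid z (fw u) -> closed (Wz z u).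
Proof. by move=> V; apply: closed_gam_mid. Qed.

Lemma flam_nil z : flam (z, [::]) = 0.
Proof.
rewrite /flam /Wz /=.
have := @f_cancel [::] (gam z) [::]; rewrite /= !cats0 f_nil => -> //.
have := closed_W (z := z) (u := [::]); rewrite /Wz /= => -> //.
Qed.

Lemma flam_cat z u v : wvalid z (fw u) -> wvalid (wend z (fw u)) (fw v) ->
  flam (z, u ++ v) = flam (z, u) + flam (wend z (fw u), v).
Proof.
move=> Vu Vv; rewrite /flam /= -f_cat ?closed_W //.
set y := wend z (fw u).
have E : Wz z u ++ Wz y v = (gam z ++ fw u) ++ winv (gam y) ++ winv (winv (gam y)) ++
   (fw v ++ winv (gam (wend y (fw v)))).
  by rewrite winvK /Wz -!catA.
have C := closed_cat (closed_W Vu) (closed_W Vv).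
rewrite -/y E in C *; rewrite f_cancel //.
by rewrite /Wz fw_cat wend_cat -!catA.
Qed.

Lemma flam_minrel lc (p q : k * ('I_n * seq Ar)) : minimal_relation src tgt e nuA lc -> p \in lc -> q \in lc ->
  flam p.2 = flam q.2.
Proof.
move=> Hm pl ql; have [E1 E2] := minrel_st He_idem He_orth HnuA Hm pl ql.
have Hm' := Hm; case: Hm' => /andP[Hv _] _ _ _ _.
have Vp := allP Hv p pl; have Vq := allP Hv q ql.
apply: f_simI; try by apply: closed_W.
apply: rst_step; exists (gam p.2.1), (fw p.2.2), (fw q.2.2), (winv (gam (wend p.2.1 (fw p.2.2)))).
split => //=.
- by rewrite /Wz E2 E1.
- by case/andP: (closed_W Vp) => -> _; case/andP: (closed_W Vq) => -> _.
right; right; exists lc, p.2.2, q.2.2; split => //; rewrite gamE.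
  by rewrite -surjective_pairing; apply: map_f pl.
by rewrite -E1 -surjective_pairing; apply: map_f ql.
Qed.
End HomF.

End PH.
Import PH.

Module PWD.
Set Implicit Arguments. Unset Strict Implicit. Unset Printing Implicit Defensive.

Section WD.
Variables (k : fieldType) (A : falgType k).
Variables (n : nat) (Ar : finType).
Variables (e : 'I_n -> A) (nuA : Ar -> A) (src tgt : Ar -> 'I_n).
Variable lam : 'I_n * seq Ar -> k.
Hypothesis Hlam : forall lc p q, minimal_relation src tgt e nuA lc -> p \in lc -> q \in lc ->
  lam p.2 = lam q.2.
Implicit Types (L : seq (k * ('I_n * seq Ar))).

Lemma nuw_const c L : nuw e nuA (fun _ => c) L = c *: nu_lc e nuA L.
Proof.
rewrite nu_lcE /PN.nuw scaler_sumr; apply: eq_bigr => p _.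
by rewrite scalerA mulr1 mulrC.
Qed.

Lemma WD_uniq L : kQ_elt src tgt L -> all (fun p => p.1 != 0) L ->
  nu_lc e nuA L = 0 -> nuw e nuA lam L = 0.
Proof.
move: {2}(size L) (leqnn (size L)) => N; elim: N L => [|N IH] L.
  by rewrite leqn0 => /nilP -> *; rewrite /PN.nuw big_nil.
move=> sL HK Hnz H0.
case: (eqVneq L [::]) => [->|Lne]; first by rewrite /PN.nuw big_nil.
have [[m [sm [/andP[cpos clt] Hm0]]]|nomin] :=
  classic (exists m : bitseq, size m = size L /\ (0 < count id m < size L)%N /\
                              nu_lc e nuA (mask m L) = 0).
  have [/andP[HV HU]] := (HK, HK).
  have Kmask m' : kQ_elt src tgt (mask m' L).
    apply/andP; split.
      by apply/allP => p /mem_mask pL; apply: (allP HV).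
    by rewrite map_mask mask_uniq.
  have NZmask m' : all (fun p => p.1 != 0) (mask m' L).
    by apply/allP => p /mem_mask pL; apply: (allP Hnz).
  have cnt : (count id m + count id (map negb m))%N = size L.
    by rewrite count_map -sm -(count_predC id m).
  have E := nuw_mask e nuA (fun _ => 1) sm.
  rewrite -!nu_lcE H0 Hm0 add0r in E.
  rewrite (nuw_mask e nuA lam sm) !IH //.
  - by rewrite addr0.
  - rewrite size_mask ?size_map //; rewrite -ltnS; apply: leq_trans sL.
    by rewrite -cnt -{1}(add0n (count id (map negb m))) ltn_add2r.
  - rewrite size_mask //; rewrite -ltnS; apply: leq_trans sL; exact: clt.
have Hmr : minimal_relation src tgt e nuA L.
  split => // m sm /andP[c1 c2]; apply/eqP => Hm0; apply: nomin.
  by exists m; split => //; split => //; rewrite c1 c2.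
clear nomin; case: L Lne sL HK Hnz H0 Hmr => [//|p0 L] _ _ _ _ H0 Hmr.
rewrite (@eq_nuw _ _ _ _ e nuA lam (fun _ => lam p0.2)); last first.
  by move=> p pL; apply: Hlam Hmr pL (mem_head _ _).
by rewrite nuw_const H0 scaler0.
Qed.

Lemma WD L : all (fun p => wvalid src tgt p.2.1 (fw p.2.2)) L ->
  nu_lc e nuA L = 0 -> nuw e nuA lam L = 0.
Proof.
move=> HV H0; rewrite -nuw_mrg; apply: WD_uniq.
- apply/andP; split; last exact: mrg_uniq.
  apply/allP => p pM; have /mrg_sub/mapP[p' p'L E] : p.2 \in map snd (mrg L).
    exact: map_f.
  by rewrite E; apply: (allP HV).
- exact: mrg_nz.
- by rewrite nu_lcE nuw_mrg -nu_lcE.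
Qed.
End WD.

End PWD.
Import PWD.

Module PD1.
Set Implicit Arguments. Unset Strict Implicit. Unset Printing Implicit Defensive.

Section Part1.
Variables (k : fieldType) (A : falgType k).
Variables (n : nat) (Ar : finType) (src tgt : Ar -> 'I_n).
Variables (e : 'I_n -> A) (nuA : Ar -> A).
Hypothesis He_idem : forall i, e i * e i = e i.
Hypothesis He_orth : forall i j, i != j -> e i * e j = 0.
Hypothesis HnuA : forall a, e (tgt a) * nuA a * e (src a) = nuA a.
Hypothesis Hsurj : forall a : A, exists lc, kQ_elt src tgt lc /\ a = nu_lc e nuA lc.
Variables (x0 : 'I_n) (gam : 'I_n -> seq (Ar * bool)).
Hypothesis Hgam : forall x, is_walk src tgt x0 x (gam x).
Variable f : seq (Ar * bool) -> k.
Hypothesis hf : hom_pi1 src tgt e nuA x0 f.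
Local Notation nu := (nu_path e nuA).
Local Notation lam := (flam src tgt gam f).
Implicit Types (L : seq (k * ('I_n * seq Ar))).

Definition allV L := all (fun p => wvalid src tgt p.2.1 (fw p.2.2)) L.

Lemma exL a : exists L, allV L && (a == nu_lc e nuA L).
Proof.
have [L [/andP[V _] E]] := Hsurj a; exists L; by rewrite /allV V E eqxx.
Qed.

Definition reprL a := xchoose (exL a).
Definition Dfun a := nuw e nuA lam (reprL a).

Lemma reprP a : allV (reprL a) /\ a = nu_lc e nuA (reprL a).
Proof. by have /andP[V /eqP E] := xchooseP (exL a). Qed.

Lemma WDf L : allV L -> nu_lc e nuA L = 0 -> nuw e nuA lam L = 0.
Proof.
apply: WD => lc p q Hm pl ql.
exact: (flam_minrel He_idem He_orth HnuA Hgam hf Hm pl ql).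
Qed.

Lemma allV_cat L1 L2 : allV (L1 ++ L2) = allV L1 && allV L2.
Proof. exact: all_cat. Qed.

Lemma allV_scale c L : allV (map (fun p => (c * p.1, p.2)) L) = allV L.
Proof. by rewrite /allV all_map. Qed.

Lemma Dfun_rep a L : allV L -> a = nu_lc e nuA L -> Dfun a = nuw e nuA lam L.
Proof.
move=> V E; have [V' E'] := reprP a.
have := @WDf (reprL a ++ map (fun p => (-1 * p.1, p.2)) L).
rewrite allV_cat allV_scale V V' !nu_lcE !nuw_cat !nuw_scale -!nu_lcE -E -E'.
rewrite scaleN1r subrr => /(_ isT erefl) /eqP.
by rewrite scaleN1r subr_eq0 => /eqP.
Qed.

Lemma Dfun_lin c a b : Dfun (c *: a + b) = c *: Dfun a + Dfun b.
Proof.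
have [Va Ea] := reprP a; have [Vb Eb] := reprP b.
rewrite (@Dfun_rep _ (map (fun p => (c * p.1, p.2)) (reprL a) ++ reprL b)).
  by rewrite nuw_cat nuw_scale.
  by rewrite allV_cat allV_scale Va Vb.
by rewrite nu_lcE nuw_cat nuw_scale -!nu_lcE -Ea -Eb.
Qed.

Lemma Dfun_nu z u : wvalid src tgt z (fw u) -> Dfun (nu z u) = lam (z, u) *: nu z u.
Proof.
move=> V; rewrite (@Dfun_rep _ [:: (1, (z, u))]).
  by rewrite /PN.nuw big_seq1 mul1r.
  by rewrite /allV /= V.
by rewrite /nu_lc big_seq1 scale1r.
Qed.

Lemma Dfun0 : Dfun 0 = 0.
Proof. exact: (D0 Dfun_lin). Qed.

Lemma Dfun_mul1 z' v z u : wvalid src tgt z' (fw v) -> wvalid src tgt z (fw u) ->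
  Dfun (nu z' v * nu z u) = Dfun (nu z' v) * nu z u + nu z' v * Dfun (nu z u).
Proof.
move=> Vv Vu; rewrite !Dfun_nu // -scalerAl -scalerAr -scalerDl.
rewrite (nu_mul He_idem He_orth HnuA) //.
case: eqP => [E|_]; last by rewrite Dfun0 scaler0.
have Vuv : wvalid src tgt z (fw (u ++ v)) by rewrite fw_cat wvalid_cat Vu E Vv.
by rewrite Dfun_nu // (flam_cat Hgam hf Vu) ?E // addrC.
Qed.

Lemma mul_sums (L1 L2 : seq (k * ('I_n * seq Ar))) (X Y : k * ('I_n * seq Ar) -> A) :
  (\sum_(p <- L1) p.1 *: X p) * (\sum_(q <- L2) q.1 *: Y q) =
  \sum_(p <- L1) \sum_(q <- L2) (p.1 * q.1) *: (X p * Y q).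
Proof.
rewrite mulr_suml; apply: eq_bigr => p _; rewrite mulr_sumr; apply: eq_bigr => q _.
by rewrite -scalerAl -scalerAr scalerA.
Qed.

Lemma Dfun_der : der0 e Dfun.
Proof.
split.
- exact: Dfun_lin.
- move=> a b; have [Va Ea] := reprP a; have [Vb Eb] := reprP b.
  move: (reprL a) (reprL b) Va Vb Ea Eb => La Lb Va Vb -> ->.
  have Dnu L : allV L -> Dfun (nu_lc e nuA L) = \sum_(p <- L) p.1 *: Dfun (nu p.2.1 p.2.2).
    by move=> _; rewrite /nu_lc (Dsum Dfun_lin); apply: eq_bigr => p _; rewrite (DZ Dfun_lin).
  rewrite !Dnu //.
  rewrite /nu_lc !mul_sums (Dsum Dfun_lin) -big_split /= big_seq [RHS]big_seq.
  apply: eq_bigr => p pa; rewrite (Dsum Dfun_lin) -big_split big_seq [RHS]big_seq.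
  apply: eq_bigr => q qb; rewrite (DZ Dfun_lin) Dfun_mul1 ?scalerDr //.
    exact: (allP Va).
  exact: (allP Vb).
- move=> i; have -> : e i = nu i [::] by [].
  by rewrite Dfun_nu // (flam_nil Hgam hf) scale0r.
Qed.

Lemma Dfun_theta : theta_rep src tgt e nuA gam f Dfun.
Proof.
split; first exact: Dfun_der.
move=> x y u /andP[V /eqP E]; rewrite Dfun_nu //.
by rewrite /flam /Wz /= E.
Qed.
End Part1.

End PD1.
Import PD1.

Module PF.
Set Implicit Arguments. Unset Strict Implicit. Unset Printing Implicit Defensive.

Lemma addr_perm (V : zmodType) (x1 x2 x3 x4 x5 x6 : V) :
  x1 + (x2 + x3) + (x4 + (- x5 - x6)) = x1 + (x2 - x5) + (x4 + (x3 - x6)).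
Proof.
rewrite -!addrA; congr (_ + (_ + _)); rewrite addrCA [in RHS]addrCA; congr (_ + _).
by rewrite addrCA.
Qed.

Section Inner.
Variables (k : fieldType) (A : falgType k).
Variables (n : nat) (e : 'I_n -> A).
Hypothesis He_idem : forall i, e i * e i = e i.
Hypothesis He_orth : forall i j, i != j -> e i * e j = 0.

Lemma der_inner D (c : 'I_n -> k) : der0 e D ->
  der0 e (fun a => D a + ((\sum_(i < n) c i *: e i) * a - a * (\sum_(i < n) c i *: e i))).
Proof.
set E := \sum_(i < n) c i *: e i.
case=> Hl HL He; split.
- move=> s a b; rewrite Hl mulrDr mulrDl -scalerAr -scalerAl opprD addrACA.
  by rewrite scalerDr scalerBr addr_perm.
- move=> a b; rewrite HL mulrDl mulrDr [RHS]addrACA; congr (_ + _).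
  by rewrite mulrBl mulrBr !mulrA addrA subrK.
- by move=> i; rewrite He add0r /E (sumE_l He_idem He_orth) (sumE_r He_idem He_orth) subrr.
Qed.
End Inner.

Section Part3.
Variables (k : fieldType) (A : falgType k).
Variables (n : nat) (Ar : finType) (src tgt : Ar -> 'I_n).
Variables (e : 'I_n -> A) (nuA : Ar -> A).
Hypothesis He_idem : forall i, e i * e i = e i.
Hypothesis He_orth : forall i j, i != j -> e i * e j = 0.
Hypothesis HnuA : forall a, e (tgt a) * nuA a * e (src a) = nuA a.
Hypothesis Hnz : forall a, nuA a != 0.
Variables (x0 : 'I_n) (gam : 'I_n -> seq (Ar * bool)).
Hypothesis Hgam : forall x, is_walk src tgt x0 x (gam x).
Hypothesis Hgam0 : gam x0 = [::].
Variable f : seq (Ar * bool) -> k.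
Hypothesis hf : hom_pi1 src tgt e nuA x0 f.
Variable D : A -> A.
Hypothesis Hth : theta_rep src tgt e nuA gam f D.
Variable c : 'I_n -> k.
Hypothesis Hc : forall a : A, D a = (\sum_(i < n) c i *: e i) * a - a * (\sum_(i < n) c i *: e i).
Local Notation wvalid := (wvalid src tgt).
Local Notation wend := (wend src tgt).

Lemma arrow_f a : f (gam (src a) ++ [:: (a, true)] ++ winv (gam (tgt a))) = c (tgt a) - c (src a).
Proof.
case: Hth => _ Hp.
have P : is_path src tgt (src a) (tgt a) [:: a] by rewrite /is_path /is_walk /= !eqxx.
have V : wvalid (src a) (fw [:: a]) by case/andP: P.
have := Hp _ _ _ P; rewrite Hc (E_nu He_idem He_orth HnuA) // (nu_E _ He_idem He_orth) /=.
move/eqP; rewrite -scalerBl eq_sym -subr_eq0 -scalerBl scaler_eq0 => /orP[|].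
  by rewrite subr_eq0 => /eqP.
have -> : nu_path e nuA (src a) [:: a] = nuA a by rewrite /nu_path /= (nuA_r He_idem HnuA).
by rewrite (negPf (Hnz a)).
Qed.

Lemma step_f st x : wvalid x [:: st] ->
  f (gam x ++ [:: st] ++ winv (gam (step_end src tgt st))) = c (step_end src tgt st) - c x.
Proof.
case: st => a [] /=; rewrite andbT => /eqP <-; rewrite /step_end /=.
  exact: arrow_f.
have -> : gam (tgt a) ++ [:: (a, false)] ++ winv (gam (src a)) =
          winv (gam (src a) ++ [:: (a, true)] ++ winv (gam (tgt a))).
  by rewrite !winv_cat winvK /winv /= -catA.
rewrite (f_winv hf) ?arrow_f ?opprB //.
apply: (closed_gam_mid Hgam) => //=; by rewrite !eqxx.
Qed.

Lemma walk_f w x : wvalid x w -> f (gam x ++ w ++ winv (gam (wend x w))) = c (wend x w) - c x.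
Proof.
elim: w x => [|st w IH] x.
  move=> _ /=; rewrite subrr.
  by have := flam_nil Hgam hf x; rewrite /flam /Wz /=.
move=> /= /andP[/eqP S V]; set z := step_end src tgt st; set y := wend z w.
have Vst : wvalid x [:: st] by rewrite /= S eqxx.
have C1 := closed_gam_mid Hgam (w := [:: st]) (y := z) Vst erefl.
have C2 := closed_gam_mid Hgam (w := w) (y := y) V erefl.
have := f_cat hf C1 C2; rewrite step_f // IH //.
have E : (gam x ++ [:: st] ++ winv (gam z)) ++ (gam z ++ w ++ winv (gam y)) =
   (gam x ++ [:: st]) ++ winv (gam z) ++ winv (winv (gam z)) ++ (w ++ winv (gam y)).
  by rewrite winvK -!catA.
have C := closed_cat C1 C2; rewrite E in C *.
rewrite (f_cancel hf) // -catA /= => ->.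
by rewrite addrC addrA subrK.
Qed.

Lemma inj_part w : closed_walk src tgt x0 w -> f w = 0.
Proof.
case/andP=> V /eqP E; have := walk_f V; rewrite E Hgam0 /= cats0 subrr.
done.
Qed.
End Part3.

End PF.
Import PF.


Theorem proposition2p7
  (k : closedFieldType) (A : falgType k) (n : nat) (Ar : finType)
  (src tgt : Ar -> 'I_n) (e : 'I_n -> A) (nuA : Ar -> A)
  (x0 : 'I_n) (T : {set Ar}) (gam : 'I_n -> seq (Ar * bool)) :
  complete_prim_orth_idem e ->
  basic_wrt e ->
  connected_alg A ->
  acyclic src tgt ->
  constricted src tgt e ->
  presentation src tgt e nuA ->
  maximal_tree src tgt x0 T ->
  tree_walks src tgt x0 T gam ->
  [/\
   forall f, hom_pi1 src tgt e nuA x0 f ->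
     exists D, theta_rep src tgt e nuA gam f D,
   forall (c : k) f g D D',
     theta_rep src tgt e nuA gam f D -> theta_rep src tgt e nuA gam g D' ->
     theta_rep src tgt e nuA gam (fun w => c * f w + g w)
                                 (fun a => c *: D a + D' a),
   forall f D, hom_pi1 src tgt e nuA x0 f -> theta_rep src tgt e nuA gam f D ->
     int0 e D -> forall w, closed_walk src tgt x0 w -> f w = 0,
   forall D, der0 e D -> exists f D',
     [/\ hom_pi1 src tgt e nuA x0 f, theta_rep src tgt e nuA gam f D' &
         int0 e (fun a => D a - D' a)] &
   forall D1 D2, der0 e D1 -> der0 e D2 -> int0 e (fun a => D1 (D2 a) - D2 (D1 a))].
Proof.
move=> [Hprim He_orth _] _ _ _ Hcon [HnuA Hsurj _ Hker] _ Htw.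
have He_idem : forall i, e i * e i = e i by move=> i; case: (Hprim i).
have Hgam : forall x, is_walk src tgt x0 x (gam x) by move=> x; case: (Htw x).
have Hgam0 : gam x0 = [::].
  case: (Htw x0) => _ _ /(_ [::]); rewrite /is_walk /= eqxx => /(_ isT isT).
  by rewrite leqn0 => /nilP.
have Hnz : forall a, nuA a != 0.
  move=> a; apply/negP => /eqP H0.
  have := Hker [:: (1, (src a, [:: a]))].
  rewrite /kQ_elt /= eqxx /nu_lc big_seq1 scale1r /nu_path /= (nuA_r He_idem HnuA) H0.
  move=> /(_ isT erefl (1, (src a, [:: a])) (mem_head _ _) isT) /eqP.
  by rewrite oner_eq0.
split.
- move=> f hf; exists (Dfun Hsurj gam f).
  exact: (Dfun_theta He_idem He_orth HnuA Hsurj Hgam hf).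
- move=> c f g D D' [[Hl HL He] Hp] [[Hl' HL' He'] Hp']; split; first split.
  + move=> s a b; rewrite Hl Hl' !scalerDr !scalerA mulrC; rewrite -!addrA; congr (_ + _).
    by rewrite addrCA.
  + move=> a b; rewrite HL HL' mulrDl mulrDr -scalerAl -scalerAr scalerDr.
    by rewrite addrACA.
  + by move=> i; rewrite He He' scaler0 addr0.
  + by move=> x y u P; rewrite (Hp _ _ _ P) (Hp' _ _ _ P) scalerA -scalerDl.
- move=> f D hf Hth [c Hc] w Cw.
  exact: (inj_part He_idem He_orth HnuA Hnz Hgam Hgam0 hf Hth Hc Cw).
- move=> D HD.
  set F := Fw HnuA Hnz Hcon HD.
  pose c i := - F (gam i).
  exists F, (fun a => D a + ((\sum_(i < n) c i *: e i) * a - a * (\sum_(i < n) c i *: e i))).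
  split.
  + exact: Fw_hom.
  + split; first exact: der_inner.
    move=> x y u /andP[V /eqP E].
    rewrite (D_nu HnuA Hnz Hcon HD) (E_nu He_idem He_orth HnuA) // (nu_E _ He_idem He_orth) E.
    rewrite -scalerBl -scalerDl /F !Fw_cat Fw_fw Fw_winv /c; congr (_ *: _).
    rewrite /F; ring.
  + exists (fun i => - c i) => a.
    rewrite opprD addrA subrr add0r.
    have -> : \sum_(i < n) - c i *: e i = - \sum_(i < n) c i *: e i.
      by rewrite -sumrN; apply: eq_bigr => i _; rewrite scaleNr.
    by rewrite mulNr mulrN opprB opprK addrC.
- move=> D1 D2 HD1 HD2; exists (fun _ => 0) => a.
  have -> : \sum_(i < n) (0 : k) *: e i = 0 by rewrite big1 // => i _; rewrite scale0r.
  rewrite mul0r mulr0 subrr.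
  have [L [/andP[V _] ->]] := Hsurj a.
  case: (HD1) => Hl1 _ _; case: (HD2) => Hl2 _ _.
  set L1 := Lam HnuA Hnz Hcon HD1; set L2 := Lam HnuA Hnz Hcon HD2.
  have E1 w : D1 (nuw e nuA w L) = nuw e nuA (fun q => w q * L1 q.2) L.
    by apply: D_nuw => // p _; exact: D_nu.
  have E2 w : D2 (nuw e nuA w L) = nuw e nuA (fun q => w q * L2 q.2) L.
    by apply: D_nuw => // p _; exact: D_nu.
  rewrite nu_lcE E1 E2 E1 E2; apply/eqP; rewrite subr_eq0; apply/eqP.
  by apply: eq_nuw => p _; rewrite mulrAC.
Qed.
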